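(* (Quantum Minimax Theorem.) For every two-player zero-sum static quantum game (as defined in the context), with $P(\chi,\xi)=\sum_{\alpha,\beta,\gamma,\delta}\chi_{\alpha\beta}\xi_{\gamma\delta}A_{\alpha\beta\gamma\delta}$ the payoff of player I, $$\max_{\chi\in\Omega_{\mathrm{I}}}\min_{\xi\in\Omega_{\mathrm{II}}}P(\chi,\xi)=\min_{\xi\in\Omega_{\mathrm{II}}}\max_{\chi\in\Omega_{\mathrm{I}}}P(\chi,\xi).$$
   Context: A two-player static quantum game: each of two players receives $q$ qubits, $n=2^q$. The referee prepares a density matrix $\rho$ on $\mathbb{C}^n\otimes\mathbb{C}^n$, sends the first $q$ qubits to player I and the last $q$ to player II; each applies a trace-preserving completely positive map to their part and returns it; the referee measures with a POVM $\{M_m\}_{m=1}^L$ and awards player $k\in\{\mathrm{I},\mathrm{II}\}$ the amount $a^k_m\in\mathbb{R}$ on outcome $m$. The game is zero-sum if $a^{\mathrm{I}}_m=-a^{\mathrm{II}}_m$ for all $m$. Let $R=\sum_m a^{\mathrm{I}}_m M_m^\dagger M_m$. Fix a basis $\{\tilde E_\alpha\}_{\alpha=1}^{4^q}$ of the $n\times n$ complex matrices. A trace-preserving completely positive map with Kraus operators $E_j=\sum_\alpha e_{j\alpha}\tilde E_\alpha$ is represented by its chi matrix $\chi_{\alpha\beta}=\sum_j e_{j\alpha}\overline{e_{j\beta}}$. The strategy sets $\Omega_{\mathrm{I}}=\Omega_{\mathrm{II}}$ are the set of all $4^q\times4^q$ positive semidefinite Hermitian matrices $\chi$ with $\sum_{\alpha,\beta}\overline{\chi_{\alpha\beta}}\tilde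 E_\alpha^\dagger\tilde E_\beta=I$. The coefficients are $A_{\alpha\beta\gamma\delta}=\mathrm{tr}\big[R(\tilde E_\alpha\otimes\tilde E_\gamma)\rho(\tilde E_\beta^\dagger\otimes\tilde E_\delta^\dagger)\big]$; then $P(\chi,\xi)$ equals $\mathrm{tr}(R\pi)$ for the final state $\pi$ when player I plays $\chi$ and player II plays $\xi$, and it is real. *)

(* Defs.v *)
From mathcomp Require Import all_boot all_order all_algebra.
From mathcomp Require Export reals complex mxtens.
Set Implicit Arguments.
Unset Strict Implicit.
Unset Printing Implicit Defensive.
Import Order.TTheory GRing.Theory Num.Theory.
Local Open Scope ring_scope.

Section QGame.
Variable R : realType.
Local Notation C := (R[i]).

Definition adjmx m n (A : 'M[C]_(m, n)) : 'M[C]_(n, m) :=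
  \matrix_(i, j) (A j i)^*.

(* positive semidefinite Hermitian matrix; the order on C = R[i] is the
   usual partial order: 0 <= z iff z is a nonnegative real *)
Definition psd_herm n (A : 'M[C]_n) : Prop :=
  adjmx A = A /\ forall v : 'cV[C]_n, 0 <= (adjmx v *m A *m v) 0 0.

Definition density n (rho : 'M[C]_n) : Prop := psd_herm rho /\ \tr rho = 1.

Definition povm n L (M : 'I_L -> 'M[C]_n) : Prop :=
  \sum_(m < L) adjmx (M m) *m M m = 1%:M.

Definition obsR n L (a : 'I_L -> R) (M : 'I_L -> 'M[C]_n) : 'M[C]_n :=
  \sum_(m < L) real_complex R (a m) *: (adjmx (M m) *m M m).

Definition is_mx_basis n (E : 'I_(n * n) -> 'M[C]_n) : Prop :=
  row_free (\matrix_(a < n * n) mxvec (E a)) /\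
  row_full (\matrix_(a < n * n) mxvec (E a)).

(* strategy set Omega: chi matrices of trace-preserving CP maps *)
Definition Omega n (E : 'I_(n * n) -> 'M[C]_n) (chi : 'M[C]_(n * n)) : Prop :=
  psd_herm chi /\
  \sum_(a < n * n) \sum_(b < n * n) (chi a b)^* *: (adjmx (E a) *m E b) = 1%:M.

Definition coefA n (E : 'I_(n * n) -> 'M[C]_n) (Robs rho : 'M[C]_(n * n))
    (a b c d : 'I_(n * n)) : C :=
  \tr (Robs *m (E a *t E c) *m rho *m (adjmx (E b) *t adjmx (E d))).

Definition payoffC n (E : 'I_(n * n) -> 'M[C]_n) (Robs rho : 'M[C]_(n * n))
    (chi xi : 'M[C]_(n * n)) : C :=
  \sum_(a < n * n) \sum_(b < n * n) \sum_(c < n * n) \sum_(d < n * n)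
    chi a b * xi c d * coefA E Robs rho a b c d.

(* P as a real number (P is real, see context) *)
Definition payoff n (E : 'I_(n * n) -> 'M[C]_n) (Robs rho : 'M[C]_(n * n))
    (chi xi : 'M[C]_(n * n)) : R :=
  complex.Re (payoffC E Robs rho chi xi).

End QGame.

Definition is_min_on (R : realType) (T : Type) (S : T -> Prop) (f : T -> R) (v : R) : Prop :=
  (exists2 x, S x & f x = v) /\ (forall x, S x -> v <= f x).
Definition is_max_on (R : realType) (T : Type) (S : T -> Prop) (f : T -> R) (v : R) : Prop :=
  (exists2 x, S x & f x = v) /\ (forall x, S x -> f x <= v).

Definition maxmin_is (R : realType) (T U : Type) (S1 : T -> Prop) (S2 : U -> Prop)
    (P : T -> U -> R) (v : R) : Prop :=
  (forall x, S1 x -> exists m, is_min_on S2 (P x) m) /\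
  (exists2 x0, S1 x0 & is_min_on S2 (P x0) v) /\
  (forall x m, S1 x -> is_min_on S2 (P x) m -> m <= v).

Definition minmax_is (R : realType) (T U : Type) (S1 : T -> Prop) (S2 : U -> Prop)
    (P : T -> U -> R) (v : R) : Prop :=
  (forall y, S2 y -> exists M, is_max_on S1 (fun x => P x y) M) /\
  (exists2 y0, S2 y0 & is_max_on S1 (fun x => P x y0) v) /\
  (forall y M, S2 y -> is_max_on S1 (fun x => P x y) M -> v <= M).

(* Main.v *)
Require Import Defs.
From mathcomp Require Import all_boot all_order all_algebra.
From mathcomp Require Import reals complex mxtens.
From mathcomp Require Import all_classical all_reals all_analysis.
From mathcomp Require Import ring lra.
From mathcomp Require Import finmap.
Import Order.TTheory GRing.Theory Num.Theory.
Import numFieldNormedType.Exports.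
Local Open Scope classical_set_scope.
Local Open Scope complex_scope.
Local Open Scope ring_scope.
Set Implicit Arguments.
Unset Strict Implicit.
Unset Printing Implicit Defensive.

Section Top.
Variable R : realType.
Local Notation rV n := 'rV[R]_n.

Definition lin n (g : rV n -> R) :=
  forall (a : R) (u v : rV n), g (a *: u + v) = a * g u + g v.

Lemma lin0 n (g : rV n -> R) : lin g -> g 0 = 0.
Proof. by move=> hg; have h := hg 1 0 0; rewrite scale1r addr0 mul1r in h; lra. Qed.

Lemma linD n (g : rV n -> R) : lin g -> forall u v, g (u + v) = g u + g v.
Proof. by move=> hg u v; rewrite -[u]scale1r hg mul1r scale1r. Qed.

Lemma linZ n (g : rV n -> R) : lin g -> forall a u, g (a *: u) = a * g u.
Proof. by move=> hg a u; rewrite -[a *: u]addr0 hg lin0 // addr0. Qed.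

Lemma lin_sum n (g : rV n -> R) (I : Type) (r : seq I) (P : pred I) F :
  lin g -> g (\sum_(i <- r | P i) F i) = \sum_(i <- r | P i) g (F i).
Proof.
move=> hg; apply: (big_rec2 (fun a b => g a = b)); first exact: lin0.
by move=> i a b _ <-; rewrite linD.
Qed.

Lemma lin_expand n (g : rV n -> R) : lin g ->
  forall u, g u = \sum_(i < n) u 0 i * g (delta_mx 0 i).
Proof.
move=> hg u; rewrite {1}(matrix_sum_delta u) big_ord1 lin_sum //.
by apply: eq_bigr => i _; rewrite linZ.
Qed.

Lemma sum_cont (T : topologicalType) k (h : 'I_k -> T -> R) :
  (forall i, continuous (h i)) -> continuous (fun u => \sum_(i < k) h i u).
Proof.
elim: k h => [|k IH] h hc.
  by under eq_fun do rewrite big_ord0; exact: cst_continuous.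
under eq_fun do rewrite big_ord_recr /=.
move=> x; apply: continuousD; first exact: (IH (fun i => h (widen_ord (leqnSn k) i))).
exact: hc.
Qed.

Lemma cont_addc (T : topologicalType) (g : T -> R) c :
  continuous g -> continuous (fun x => g x + c).
Proof. move=> hg x; apply: continuousD; [exact: hg | exact: cst_continuous]. Qed.

Lemma lin_cont n (g : rV n -> R) : lin g -> continuous g.
Proof.
move=> hg; have -> : g = fun u => \sum_(i < n) u 0 i * g (delta_mx 0 i).
  by apply: funext => u; exact: lin_expand.
apply: sum_cont => i x; apply: continuousM; first exact: coord_continuous.
exact: cst_continuous.
Qed.

Lemma closed_lin_eq n (g : rV n -> R) c : lin g -> closed [set u | g u = c].
Proof.
move=> hg; exact: ((continuous_closedP g).1 (lin_cont hg) _ (@closed_eq _ c)).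
Qed.

Lemma closed_lin_ge n (g : rV n -> R) c : lin g -> closed [set u | c <= g u].
Proof.
move=> hg; exact: ((continuous_closedP g).1 (lin_cont hg) _ (@closed_ge _ c)).
Qed.


Definition simplex k (l : rV k) := (forall i, 0 <= l 0 i) /\ \sum_i l 0 i = 1.

Lemma lin_coord k (i : 'I_k) : lin (fun l : rV k => l 0 i).
Proof. by move=> a u v; rewrite !mxE. Qed.

Lemma lin_wsum k (c : 'I_k -> R) : lin (fun l : rV k => \sum_i l 0 i * c i).
Proof.
move=> a u v; rewrite mulr_sumr -big_split; apply: eq_bigr => i _.
by rewrite !mxE mulrDl mulrA.
Qed.

Lemma simplex_le1 k (l : rV k) i : simplex l -> l 0 i <= 1.
Proof.
case=> l0 l1; rewrite -l1 (bigD1 i) //= lerDl; exact: sumr_ge0.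
Qed.

Lemma compact_simplex k : compact (@simplex k).
Proof.
have hc : compact [set v : rV k | forall i : 'I_k, `[(0:R), 1]%classic (v ord0 i)].
  have := (@rV_compact R k (fun=> `[(0:R),1]%classic) (fun=> @segment_compact R 0 1)).
  exact.
apply: (subclosed_compact _ hc).
- have -> : @simplex k = \bigcap_(i in setT) [set l : rV k | 0 <= l 0 i]
      `&` [set l | \sum_i l 0 i * 1 = 1].
    apply/seteqP; split => l.
      case=> h1 h2; split; [move=> i _; exact: h1|rewrite /=].
      by under eq_bigr do rewrite mulr1.
    case=> h1 h2; split; [move=> i; exact: h1 i I|move: h2 => /=].
    by under eq_bigr do rewrite mulr1.
  apply: closedI; last exact: closed_lin_eq (lin_wsum _).
  apply: closed_bigI => i _; rewrite -[X in closed X]/[set l : rV k | 0 <= l 0 i].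
  exact: closed_lin_ge (lin_coord _).
- move=> l hl i /=; rewrite in_itv /=; apply/andP; split.
    exact: hl.1.
  exact: simplex_le1.
Qed.

Lemma simplex_delta k (j : 'I_k) : simplex (delta_mx 0 j).
Proof.
split=> [i|]; first by rewrite mxE ler0n.
rewrite (bigD1 j) //= big1 => [|i /negbTE nij]; first by rewrite mxE !eqxx addr0.
by rewrite mxE nij andbF.
Qed.

Lemma simplex_conv k (l m : rV k) t : simplex l -> simplex m -> 0 <= t <= 1 ->
  simplex ((1 - t) *: l + t *: m).
Proof.
move=> [l0 l1] [m0 m1] /andP[t0 t1]; split=> [i|].
  rewrite !mxE; apply: addr_ge0; apply: mulr_ge0 => //; lra.
under eq_bigr do rewrite !mxE.
by rewrite big_split /= -!mulr_sumr l1 m1; lra.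
Qed.

Lemma bigmin_le_seq (I : eqType) (r : seq I) (x0 : R) F j : j \in r ->
  \big[Order.min/x0]_(i <- r) F i <= F j.
Proof.
elim: r => // a r IH; rewrite in_cons big_cons => /orP[/eqP->|/IH h].
  by rewrite ge_min lexx.
by rewrite ge_min h orbT.
Qed.

Lemma bigmin_gt (I : Type) (r : seq I) (x0 : R) F c : c < x0 ->
  (forall i, c < F i) -> c < \big[Order.min/x0]_(i <- r) F i.
Proof.
move=> h0 hF; elim/big_ind: _ => // x y hx hy; by rewrite lt_min hx hy.
Qed.

Lemma bigmin_cont (T : topologicalType) k (h : 'I_k -> T -> R) (h0 : T -> R) :
  continuous h0 -> (forall i, continuous (h i)) ->
  continuous (fun u => \big[Order.min/h0 u]_(i < k) h i u).
Proof.
move=> c0; elim: k h => [|k IH] h hc.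
  by under eq_fun do rewrite big_ord0.
under eq_fun do rewrite big_ord_recl.
exact: (@min_fun_continuous _ _ _ (h ord0) (fun u => \big[Order.min/h0 u]_(i < k)
   h (lift ord0 i) u) (hc _) (IH _ (fun i => hc _))).
Qed.

Definition pos (x : R) := Order.max x 0.
Lemma pos_ge0 x : 0 <= pos x. Proof. by rewrite le_max lexx orbT. Qed.
Lemma pos_ge x : x <= pos x. Proof. by rewrite le_max lexx. Qed.
Lemma pos_0 x : x <= 0 -> pos x = 0. Proof. exact: max_r. Qed.
Lemma pos_id x : 0 <= x -> pos x = x. Proof. exact: max_l. Qed.

Lemma pos_alt x : pos x = (x + `|x|) / 2.
Proof.
have [h|h] := lerP x 0; first by rewrite pos_0 // ler0_norm //; lra.
by rewrite pos_id ?gtr0_norm //; lra.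
Qed.

Lemma pos_cont (T : topologicalType) (g : T -> R) :
  continuous g -> continuous (fun t => pos (g t)).
Proof.
move=> hg; under eq_fun do rewrite pos_alt.
move=> x; apply: (@continuousM _ _ (fun t => g t + `|g t|) (fun=> 2^-1));
  last exact: cst_continuous.
apply: (@continuousD _ _ _ g (fun t => `|g t|)); first exact: hg.
exact: (continuous_comp (hg x) (@norm_continuous _ R^o _)).
Qed.

Lemma pos_sq s e : pos (s + e) * pos (s + e) <= (pos s + e) * (pos s + e).
Proof.
have [h|h] := lerP (s + e) 0.
  by rewrite pos_0 // mulr0 -expr2 sqr_ge0.
rewrite pos_id; last lra.
have := pos_ge s; have := pos_ge0 s; nra.
Qed.

Lemma pos_mul s : pos s * s = pos s * pos s.
Proof.
have [h|h] := lerP s 0; first by rewrite pos_0 // !mul0r.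
by rewrite pos_id //; lra.
Qed.


Definition rowv k (B : 'I_k -> 'I_k -> R) (m : rV k) i := \sum_j B i j * m 0 j.
Definition colv k (B : 'I_k -> 'I_k -> R) (l : rV k) j := \sum_i l 0 i * B i j.

Lemma lin_rowv k B (i : 'I_k) : lin (fun m => rowv B m i).
Proof.
move=> a u v; rewrite /rowv mulr_sumr -big_split; apply: eq_bigr => j _.
by rewrite !mxE mulrDr mulrCA.
Qed.

Lemma lin_colv k B (j : 'I_k) : lin (fun l => colv B l j).
Proof. exact: lin_wsum. Qed.

Lemma rowv_delta k B (i j : 'I_k) : rowv B (delta_mx 0 j) i = B i j.
Proof.
rewrite /rowv (bigD1 j) //= big1 => [|j' /negbTE nj]; first by rewrite mxE !eqxx mulr1 addr0.
by rewrite mxE nj andbF mulr0.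
Qed.

Lemma fin_game k (B : 'I_k -> 'I_k -> R) : (0 < k)%N ->
  exists l, exists m, [/\ simplex l, simplex m &
    forall i j, rowv B m i <= colv B l j].
Proof.
case: k B => // k B _.
pose phi := fun l : rV k.+1 => \big[Order.min/colv B l ord0]_(j < k.+1) colv B l j.
have phic : continuous phi.
  apply: bigmin_cont; first exact: lin_cont (lin_colv _ _).
  by move=> j; exact: lin_cont (lin_colv _ _).
have sne : (@simplex k.+1) !=set0 by exists (delta_mx 0 ord0); exact: simplex_delta.
have [ls lsS lsmax] := compact_EVT_max sne (@compact_simplex _) (@continuous_subspaceT _ _ _ _ phic).
rewrite in_setE in lsS.
set v := phi ls.
have colge j : v <= colv B ls j by apply: bigmin_le_seq; rewrite mem_index_enum.
suff [m mS mle] : exists2 m, simplex m & forall i, rowv B m i <= v.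
  by exists ls, m; split => // i j; exact: le_trans (mle i) (colge j).
have [//|nex] := pselect (exists2 m, simplex m & forall i, rowv B m i <= v).
exfalso.
have hgt m : simplex m -> exists i, v < rowv B m i.
  move=> mS; apply: contrapT => h; apply: nex; exists m => // i.
  rewrite leNgt; apply/negP => hi; apply: h; by exists i.
pose psi := fun m : rV k.+1 => \sum_i pos (rowv B m i - v) * pos (rowv B m i - v).
have psic : continuous psi.
  rewrite /psi; apply: sum_cont; move=> j.
  have c1 : continuous (fun m => pos (rowv B m j - v)).
    exact: (pos_cont (cont_addc (c:=-v) (lin_cont (lin_rowv B j)))).
  by move=> x; apply: (@continuousM _ _ (fun m => pos (rowv B m j - v)) (fun m => pos (rowv B m j - v))); exact: c1.
have [m0 m0S m0min] := compact_EVT_min sne (@compact_simplex _) (@continuous_subspaceT _ _ _ _ psic).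
rewrite in_setE in m0S.
pose p i := pos (rowv B m0 i - v).
have var m : simplex m -> 0 <= \sum_i p i * (rowv B m i - rowv B m0 i).
  move=> mS; set S := \sum_i _.
  rewrite leNgt; apply/negP => Sneg.
  set Q := \sum_i (rowv B m i - rowv B m0 i) * (rowv B m i - rowv B m0 i).
  have Q0 : 0 <= Q by apply: sumr_ge0 => i _; rewrite -expr2 sqr_ge0.
  set t := - S / (Q - S).
  have QS : 0 < Q - S by lra.
  have tQS : t * (Q - S) = - S by rewrite /t mulfVK // gt_eqF.
  have t0 : 0 < t by rewrite /t divr_gt0 //; lra.
  have t1 : t <= 1 by rewrite /t ler_pdivrMr //; lra.
  have mtS : simplex ((1 - t) *: m0 + t *: m).
    by apply: simplex_conv => //; rewrite (ltW t0) t1.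
  have := m0min _ (mem_set mtS).
  have rt i : rowv B ((1 - t) *: m0 + t *: m) i =
      rowv B m0 i - v + t * (rowv B m i - rowv B m0 i) + v.
    by rewrite (lin_rowv B i) (linZ (lin_rowv B i)); ring.
  rewrite /psi; under [X in _ <= X -> _]eq_bigr do rewrite rt addrK.
  move=> hle.
  have hle2 : \sum_i p i * p i <=
      \sum_i (p i + t * (rowv B m i - rowv B m0 i)) * (p i + t * (rowv B m i - rowv B m0 i)).
    apply: (le_trans hle); apply: ler_sum => i _; exact: pos_sq.
  have expand : \sum_i (p i + t * (rowv B m i - rowv B m0 i)) *
      (p i + t * (rowv B m i - rowv B m0 i)) =
      \sum_i p i * p i + 2 * t * S + t * t * Q.
    rewrite /S /Q !mulr_sumr -!big_split; apply: eq_bigr => i _ /=; ring.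
  rewrite expand in hle2.
  have h3 : 0 <= 2 * t * S + t * t * Q by lra.
  have h4 : 0 <= t * ((2 * S + t * Q) * (Q - S)) by
    rewrite -(@pmulr_rge0 _ t) //; nra.
  have h5 : (2 * S + t * Q) * (Q - S) = S * Q - 2 * S * S.
    have -> : (2 * S + t * Q) * (Q - S) = 2 * S * (Q - S) + Q * (t * (Q - S)) by ring.
    rewrite tQS; ring.
  rewrite h5 in h4; nra.
have [i0 hi0] := hgt _ m0S.
have p0 i : 0 <= p i by exact: pos_ge0.
have pi0 : 0 < p i0 by rewrite /p pos_id; lra.
set P := \sum_i p i.
have P0 : 0 < P.
  rewrite /P (bigD1 i0) //=; apply: (lt_le_trans pi0); rewrite lerDl.
  exact: sumr_ge0.
have Q0 : 0 < \sum_i p i * p i.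
  rewrite (bigD1 i0) //=; apply: (lt_le_trans (mulr_gt0 pi0 pi0)); rewrite lerDl.
  by apply: sumr_ge0 => i _; exact: mulr_ge0.
have key : \sum_i p i * rowv B m0 i = \sum_i p i * p i + v * P.
  rewrite /P mulr_sumr -big_split; apply: eq_bigr => i _ /=.
  have := pos_mul (rowv B m0 i - v); rewrite -/(p i) => h; lra.
pose lam : rV k.+1 := P^-1 *: \row_i p i.
have lamS : simplex lam.
  split=> [i|]; first by rewrite !mxE; apply: mulr_ge0 => //; rewrite invr_ge0 ltW.
  under eq_bigr do rewrite !mxE.
  by rewrite -mulr_sumr mulVf // gt_eqF.
have colgt j : v < colv B lam j.
  have := var _ (simplex_delta j).
  under eq_bigr do rewrite rowv_delta.
  have -> : \sum_i p i * (B i j - rowv B m0 i) = \sum_i p i * B i j - \sum_i p i * rowv B m0 i.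
    by rewrite -sumrB; apply: eq_bigr => i _; ring.
  rewrite key => h.
  have : v * P < \sum_i p i * B i j by lra.
  rewrite /colv; under [X in _ -> _ < X]eq_bigr do rewrite !mxE -mulrA.
  rewrite -mulr_sumr => h2.
  by rewrite -(ltr_pM2l P0) mulrA mulfV ?gt_eqF // mul1r mulrC.
have := lsmax _ (mem_set lamS).
rewrite -/v leNgt => /negP; apply.
by apply: bigmin_gt => //; exact: colgt.
Qed.


Lemma fip (T : topologicalType) (A : set T) (I : choiceType) (D : set I) (g : I -> set T) :
  compact A -> D !=set0 -> (forall i, D i -> closed (g i)) ->
  finI D (fun i => A `&` g i) -> exists p, A p /\ forall i, D i -> g i p.
Proof.
move=> Aco [i Di] gcl finIf.
have [|p [Ap clfinIfp]] := Aco _ (finI_filter finIf).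
  by exists (A `&` g i); [apply: finI_from1|move=> ? []].
exists p; split=> // j Dj; apply: gcl => // B.
by apply: clfinIfp; exists (A `&` g j); [apply: finI_from1|move=> ? []].
Qed.

Section Minimax.
Variables (N M : nat) (X : set (rV N)) (Y : set (rV M)) (f : rV N -> rV M -> R).
Hypotheses (cX : compact X) (cY : compact Y) (neX : X !=set0) (neY : Y !=set0).
Hypothesis cvxX : forall k (l : rV k) (p : 'I_k -> rV N), (0 < k)%N -> simplex l ->
  (forall i, X (p i)) -> X (\sum_i l 0 i *: p i).
Hypothesis cvxY : forall k (l : rV k) (p : 'I_k -> rV M), (0 < k)%N -> simplex l ->
  (forall i, Y (p i)) -> Y (\sum_i l 0 i *: p i).
Hypothesis linl : forall y, lin (fun x => f x y).
Hypothesis linr : forall x, lin (f x).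


Lemma saddle : exists x0, exists y0, [/\ X x0, Y y0,
  (forall x, X x -> f x y0 <= f x0 y0) & (forall y, Y y -> f x0 y0 <= f x0 y)].
Proof.
pose g (i : rV N * rV M) := [set z : rV N * rV M | 0 <= f z.1 i.2 - f i.1 z.2].
have gcl i : closed (g i).
  apply: ((continuous_closedP _).1 _ _ (@closed_ge _ 0)) => z.
  apply: (@continuousB _ _ _ (fun z : rV N * rV M => f z.1 i.2)
                         (fun z : rV N * rV M => f i.1 z.2)).
    apply: (continuous_comp (f := fst) (g := fun x => f x i.2)); first exact: cvg_fst.
    exact: (lin_cont (linl _)).
  apply: (continuous_comp (f := snd) (g := f i.1)); first exact: cvg_snd.
  exact: (lin_cont (linr _)).
have [x1 Xx1] := neX; have [y1 Yy1] := neY.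
have [[x0 y0] [[/= Xx0 Yy0] H]] : exists p, (X `*` Y) p /\
    forall i, (X `*` Y) i -> g i p.
  apply: fip => //; first exact: compact_setX.
    by exists (x1, y1).
  move=> D' subD.
  set s := (D' : seq _).
  have [s0|sgt0] := eqVneq (size s) 0%N.
    exists (x1, y1) => i /= iD; exfalso.
    have : i \in s by []. by rewrite (size0nil s0).
  pose i0 := (x1, y1).
  have sp : (0 < size s)%N by rewrite lt0n.
  pose B (t t' : 'I_(size s)) := f (nth i0 s t).1 (nth i0 s t').2.
  have [l [m [lS mS sad]]] := fin_game B sp.
  pose x := \sum_t l 0 t *: (nth i0 s t).1.
  pose y := \sum_t m 0 t *: (nth i0 s t).2.
  have sD (t : 'I_(size s)) : (X `*` Y) (nth i0 s t).
    have h := mem_nth i0 (ltn_ord t).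
    by have := subD _ h; rewrite in_setE.
  have Xx : X x by apply: cvxX => // t; exact: (sD t).1.
  have Yy : Y y by apply: cvxY => // t; exact: (sD t).2.
  exists (x, y) => i /= iD; split; first by [].
  have iD' : i \in s by [].
  have ilt : (index i s < size s)%N by rewrite index_mem.
  pose t := Ordinal ilt.
  have ti : nth i0 s t = i by exact: nth_index.
  rewrite /g /= subr_ge0.
  have -> : f i.1 y = rowv B m t.
    rewrite /y (lin_sum _ _ _ (linr _)) /rowv; apply: eq_bigr => t' _.
    by rewrite (linZ (linr _)) /B ti mulrC.
  have -> : f x i.2 = colv B l t.
    rewrite /x (lin_sum _ _ _ (linl _)) /colv; apply: eq_bigr => t' _.
    by rewrite (linZ (linl _)) /B ti.
  exact: sad.
exists x0, y0; split => //.
  move=> x Xx; have := H (x, y0) (conj Xx Yy0); rewrite /g /=; lra.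
move=> y Yy; have := H (x0, y) (conj Xx0 Yy); rewrite /g /=; lra.
Qed.

Lemma attain_min x : exists2 y, Y y & forall y', Y y' -> f x y <= f x y'.
Proof.
have [y Yy ym] := compact_EVT_min neY cY (@continuous_subspaceT _ _ _ _ (lin_cont (linr x))).
by exists y; [rewrite in_setE in Yy|move=> y' Yy'; apply: ym; rewrite in_setE].
Qed.

Lemma attain_max y : exists2 x, X x & forall x', X x' -> f x' y <= f x y.
Proof.
have [x Xx xm] := compact_EVT_max neX cX (@continuous_subspaceT _ _ _ _ (lin_cont (linl y))).
by exists x; [rewrite in_setE in Xx|move=> x' Xx'; apply: xm; rewrite in_setE].
Qed.

End Minimax.

End Top.

Section Q.
Variable R : realType.
Local Notation C := R[i].

Lemma adjmxE m p (A : 'M[C]_(m, p)) i j : adjmx A i j = (A j i)^*.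
Proof. by rewrite mxE. Qed.

Lemma adjmx_mul m p r (A : 'M[C]_(m, p)) (B : 'M[C]_(p, r)) :
  adjmx (A *m B) = adjmx B *m adjmx A.
Proof.
apply/matrixP => i j; rewrite !mxE rmorph_sum; apply: eq_bigr => k _.
by rewrite !mxE rmorphM mulrC.
Qed.

Lemma adjmxK m p (A : 'M[C]_(m, p)) : adjmx (adjmx A) = A.
Proof. by apply/matrixP => i j; rewrite !mxE conjCK. Qed.

Lemma adjmxD m p (A B : 'M[C]_(m, p)) : adjmx (A + B) = adjmx A + adjmx B.
Proof. by apply/matrixP => i j; rewrite !mxE rmorphD. Qed.

Lemma adjmxZ m p (c : C) (A : 'M[C]_(m, p)) : adjmx (c *: A) = c^* *: adjmx A.
Proof. by apply/matrixP => i j; rewrite !mxE rmorphM. Qed.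

Lemma adjmx_sum m p (I : Type) (r : seq I) (P : pred I) (F : I -> 'M[C]_(m, p)) :
  adjmx (\sum_(i <- r | P i) F i) = \sum_(i <- r | P i) adjmx (F i).
Proof.
apply/matrixP => i j; rewrite mxE !summxE rmorph_sum; apply: eq_bigr => k _.
by rewrite !mxE.
Qed.

Lemma adjmx1 m : adjmx (1%:M : 'M[C]_m) = 1%:M.
Proof. by apply/matrixP => i j; rewrite !mxE conjC_nat eq_sym. Qed.

Lemma conj_real (a : R) : (a%:C)^* = a%:C.
Proof. by rewrite conj_Creal // complex_real. Qed.

Lemma Re_lin (a : R) (z w : C) : complex.Re (a%:C * z + w) = a * complex.Re z + complex.Re w.
Proof. by case: z => x y; case: w => x' y' /=; ring. Qed.

Lemma Im_lin (a : R) (z w : C) : complex.Im (a%:C * z + w) = a * complex.Im z + complex.Im w.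
Proof. by case: z => x y; case: w => x' y' /=; ring. Qed.

Lemma eqC (z w : C) : z = w <-> complex.Re z = complex.Re w /\ complex.Im z = complex.Im w.
Proof. by split=> [->//|]; case: z => x y; case: w => x' y' /= [-> ->]. Qed.

Lemma geC0 (z : C) : 0 <= z <-> complex.Im z = 0 /\ 0 <= complex.Re z.
Proof. by rewrite lecE; split => [/andP[/eqP -> ->]//|[-> ->]]; rewrite eqxx. Qed.


Lemma conjZ (a : R) (z : C) : (a%:C * z)^* = a%:C * z^*.
Proof. by case: z => x y; apply/eqC; split => /=; ring. Qed.

Lemma conjL (a : R) (z w : C) : (a%:C * z + w)^* = a%:C * z^* + w^*.
Proof. by case: z => x y; case: w => x' y'; apply/eqC; split => /=; ring. Qed.

Lemma conj_sumC (I : Type) (r : seq I) (P : pred I) (F : I -> C) :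
  (\sum_(i <- r | P i) F i)^* = \sum_(i <- r | P i) (F i)^*.
Proof. exact: rmorph_sum. Qed.

Section Enc.
Variable K : nat.
Local Notation NN := (K * K + K * K)%N.

Definition dec (r : 'rV[R]_NN) : 'M[C]_K :=
  \matrix_(a, b) Complex (vec_mx (lsubmx r) a b) (vec_mx (rsubmx r) a b).

Definition enc (A : 'M[C]_K) : 'rV[R]_NN :=
  row_mx (mxvec (\matrix_(a, b) complex.Re (A a b)))
         (mxvec (\matrix_(a, b) complex.Im (A a b))).

Lemma dec_enc A : dec (enc A) = A.
Proof.
rewrite /dec /enc row_mxKl row_mxKr !mxvecK; apply/matrixP => a b; rewrite !mxE.
by case: (A a b).
Qed.

Lemma dec_lin (a : R) r s : dec (a *: r + s) = a%:C *: dec r + dec s.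
Proof.
rewrite /dec !linearD !linearZ /=; apply/matrixP => i j; rewrite !mxE.
by apply/eqC => /=; split; ring.
Qed.

Definition clin (h : 'M[C]_K -> C) :=
  forall (a : R) A B, h (a%:C *: A + B) = a%:C * h A + h B.

Lemma lin_Re h : clin h -> lin (fun r => complex.Re (h (dec r))).
Proof. by move=> hh a r s; rewrite dec_lin hh Re_lin. Qed.

Lemma lin_Im h : clin h -> lin (fun r => complex.Im (h (dec r))).
Proof. by move=> hh a r s; rewrite dec_lin hh Im_lin. Qed.

Lemma closed_clin_eq h c : clin h -> closed [set r | h (dec r) = c].
Proof.
move=> hh.
have -> : [set r | h (dec r) = c] =
   [set r | complex.Re (h (dec r)) = complex.Re c] `&`
   [set r | complex.Im (h (dec r)) = complex.Im c].
  by apply/seteqP; split => r /=; rewrite eqC.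
by apply: closedI; apply: closed_lin_eq; [exact: lin_Re|exact: lin_Im].
Qed.

Lemma closed_clin_ge0 h : clin h -> closed [set r | 0 <= h (dec r)].
Proof.
move=> hh.
have -> : [set r | 0 <= h (dec r)] =
   [set r | complex.Im (h (dec r)) = 0] `&`
   [set r | 0 <= complex.Re (h (dec r))].
  by apply/seteqP; split => r /=; rewrite geC0.
by apply: closedI; [apply: closed_lin_eq|apply: closed_lin_ge];
   [exact: lin_Im|exact: lin_Re].
Qed.

Lemma clin_wsum (T : 'I_K -> 'I_K -> C) :
  clin (fun A => \sum_a \sum_b A a b * T a b).
Proof.
move=> c A B; rewrite mulr_sumr -big_split; apply: eq_bigr => a _ /=.
rewrite mulr_sumr -big_split; apply: eq_bigr => b _ /=.
by rewrite !mxE mulrDl mulrA.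
Qed.

End Enc.


Lemma closed_forall (T : topologicalType) (I : Type) (F : I -> set T) :
  (forall i, closed (F i)) -> closed [set x | forall i, F i x].
Proof.
move=> hF; have -> : [set x | forall i, F i x] = \bigcap_(i in setT) F i.
  by apply/seteqP; split=> x h i //; exact: h.
by apply: closed_bigI => i _; exact: hF.
Qed.

Lemma dec0 K : dec (0 : 'rV[R]_(K * K + K * K)) = 0.
Proof. by rewrite /dec !linear0; apply/matrixP => i j; rewrite !mxE. Qed.

Lemma dec_sum K k (l : 'I_k -> R) (p : 'I_k -> 'rV[R]_(K * K + K * K)) :
  dec (\sum_i l i *: p i) = \sum_i (l i)%:C *: dec (p i).
Proof.
apply: (big_rec2 (fun a b => dec a = b)); first exact: dec0.
by move=> i a b _ <-; rewrite dec_lin.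
Qed.

Section Game.
Variable n : nat.
Local Notation K := (n * n)%N.
Variables (E : 'I_K -> 'M[C]_n) (Ro rho : 'M[C]_K).
Local Notation G a b := (adjmx (E a) *m E b).

Lemma Omega_closed : closed [set r : 'rV[R]_(K * K + K * K) | Omega E (dec r)].
Proof.
have -> : [set r : 'rV[R]_(K * K + K * K) | Omega E (dec r)] =
   [set r | forall i, [set r | forall j, (fun A => adjmx A i j - A i j) (dec r) = 0] r] `&`
   [set r | forall v : 'cV[C]_K, (fun A => (adjmx v *m A *m v) 0 0) (dec r) >= 0] `&`
   [set r | forall i, [set r | forall j,
      (fun A => (\sum_a \sum_b (A a b)^* *: G a b) i j) (dec r) = (1%:M : 'M[C]_n) i j] r].
  apply/seteqP; split => r /=.
    case=> [[h1 h2] h3]; split; [split|] => //.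
    - by move=> i j; rewrite h1 subrr.
    - by move=> i j; rewrite h3.
  case=> [[h1 h2] h3]; split; [split|] => //.
  - by apply/matrixP => i j; apply: subr0_eq; exact: h1.
  - by apply/matrixP => i j; rewrite h3.
apply: closedI; first apply: closedI.
- apply: closed_forall => i; apply: closed_forall => j.
  apply: (closed_clin_eq (h := fun A => adjmx A i j - A i j)).
  by move=> a A B; rewrite !mxE conjL; ring.
- apply: closed_forall => v.
  apply: (closed_clin_ge0 (h := fun A => (adjmx v *m A *m v) 0 0)).
  by move=> a A B; rewrite mulmxDr -scalemxAr mulmxDl -scalemxAl !mxE.
- apply: closed_forall => i; apply: closed_forall => j.
  apply: (closed_clin_eq (h := fun A => (\sum_a \sum_b (A a b)^* *: G a b) i j)).
  move=> a A B /=; rewrite !summxE mulr_sumr -big_split; apply: eq_bigr => x _ /=.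
  rewrite !summxE mulr_sumr -big_split; apply: eq_bigr => y _ /=.
  by rewrite !mxE conjL; ring.
Qed.

Lemma payoffC_l chi xi : payoffC E Ro rho chi xi =
  \sum_a \sum_b chi a b * (\sum_c \sum_d xi c d * coefA E Ro rho a b c d).
Proof.
apply: eq_bigr => a _; apply: eq_bigr => b _.
rewrite mulr_sumr; apply: eq_bigr => c _; rewrite mulr_sumr; apply: eq_bigr => d _.
by rewrite mulrA.
Qed.

Lemma payoffC_r chi xi : payoffC E Ro rho chi xi =
  \sum_c \sum_d xi c d * (\sum_a \sum_b chi a b * coefA E Ro rho a b c d).
Proof.
rewrite /payoffC.
under eq_bigr do rewrite exchange_big.
rewrite exchange_big; apply: eq_bigr => c _.
under eq_bigr do rewrite exchange_big.
rewrite exchange_big; apply: eq_bigr => d _.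
rewrite mulr_sumr; apply: eq_bigr => a _; rewrite mulr_sumr; apply: eq_bigr => b _.
by rewrite mulrA [xi c d * _]mulrC.
Qed.

Definition pay (r s : 'rV[R]_(K * K + K * K)) : R :=
  payoff E Ro rho (dec r) (dec s).

Lemma pay_linl s : lin (fun r => pay r s).
Proof.
rewrite /pay /payoff; under eq_fun do rewrite payoffC_l.
exact: (lin_Re (clin_wsum _)).
Qed.

Lemma pay_linr r : lin (pay r).
Proof.
rewrite /pay /payoff; under eq_fun do rewrite payoffC_r.
exact: (lin_Re (clin_wsum _)).
Qed.

Lemma Omega_conv k (l : 'rV[R]_k) (chi : 'I_k -> 'M[C]_K) :
  simplex l -> (forall i, Omega E (chi i)) -> Omega E (\sum_i (l 0 i)%:C *: chi i).
Proof.
move=> [l0 l1] hO; split; first split.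
- rewrite adjmx_sum; apply: eq_bigr => i _.
  by rewrite adjmxZ conj_real (hO i).1.1.
- move=> v; rewrite mulmx_sumr mulmx_suml summxE; apply: sumr_ge0 => i _.
  rewrite -scalemxAr -scalemxAl mxE; apply: mulr_ge0; first by rewrite ler0c.
  exact: (hO i).1.2.
- have -> : \sum_a \sum_b ((\sum_i (l 0 i)%:C *: chi i) a b)^* *: G a b =
      \sum_i (l 0 i)%:C *: \sum_a \sum_b (chi i a b)^* *: G a b.
    under eq_bigr do under eq_bigr do rewrite summxE conj_sumC scaler_suml.
    under eq_bigr do rewrite exchange_big.
    rewrite exchange_big; apply: eq_bigr => i _; rewrite scaler_sumr.
    apply: eq_bigr => a _; rewrite scaler_sumr; apply: eq_bigr => b _.
    by rewrite mxE conjZ scalerA.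
  under eq_bigr do rewrite (hO _).2.
  by rewrite -scaler_suml -rmorph_sum l1 scale1r.
Qed.

End Game.


Definition nn (z : C) : R := `|complex.Re z| + `|complex.Im z|.

Lemma nn_ge0 z : 0 <= nn z.
Proof. by rewrite /nn addr_ge0. Qed.

Lemma nnD z w : nn (z + w) <= nn z + nn w.
Proof.
case: z => a b; case: w => c d; rewrite /nn /=.
have := ler_normD a c; have := ler_normD b d; lra.
Qed.

Lemma nnM z w : nn (z * w) <= nn z * nn w.
Proof.
case: z => a b; case: w => c d; rewrite /nn /=.
have h1 : `|a * c - b * d| <= `|a| * `|c| + `|b| * `|d|.
  by rewrite -!normrM; apply: le_trans (ler_normB _ _) _.
have h2 : `|a * d + b * c| <= `|a| * `|d| + `|b| * `|c|.
  by rewrite -!normrM; apply: ler_normD.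
have : `|a| * `|c| + `|b| * `|d| + (`|a| * `|d| + `|b| * `|c|) =
   (`|a| + `|b|) * (`|c| + `|d|) by ring.
lra.
Qed.

Lemma nn_sum (I : Type) (r : seq I) (P : pred I) (F : I -> C) :
  nn (\sum_(i <- r | P i) F i) <= \sum_(i <- r | P i) nn (F i).
Proof.
apply: (big_rec2 (fun a b => nn a <= b)); first by rewrite /nn /= normr0 addr0.
by move=> i a b _ h; apply: le_trans (nnD _ _) _; rewrite lerD2l.
Qed.

Lemma nn_conj z : nn z^* = nn z.
Proof. by case: z => a b; rewrite /nn /= normrN. Qed.

Lemma nn_Re z : `|complex.Re z| <= nn z.
Proof. by rewrite /nn lerDl. Qed.

Lemma nn_Im z : `|complex.Im z| <= nn z.
Proof. by rewrite /nn lerDr. Qed.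

Definition qf m (A : 'M[C]_m) (u : 'cV[C]_m) := (adjmx u *m A *m u) 0 0.

Lemma qf_delta m (A : 'M[C]_m) k l (x y : C) :
  qf A (x *: delta_mx k 0 + y *: delta_mx l 0) =
  x^* * x * A k k + x^* * y * A k l + y^* * x * A l k + y^* * y * A l l.
Proof.
have dA (i j : 'I_m) : (adjmx (delta_mx i 0 : 'cV[C]_m) *m A *m (delta_mx j 0 : 'cV[C]_m)) 0 0 = A i j.
  have -> : adjmx (delta_mx i 0 : 'cV[C]_m) = delta_mx 0 i.
    by apply/matrixP => a b; rewrite !mxE conjC_nat andbC.
  by rewrite -rowE -colE !mxE.
have dA' (i j : 'I_m) : adjmx (delta_mx i 0 : 'cV[C]_m) *m A *m (delta_mx j 0 : 'cV[C]_m) = (A i j)%:M.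
  by apply/matrixP => a b; rewrite [a]ord1 [b]ord1 dA mxE eqxx mulr1n.
rewrite /qf adjmxD !adjmxZ !mulmxDl !mulmxDr -!scalemxAl -!scalemxAr !dA'.
rewrite !mxE !eqxx !mulr1n; ring.
Qed.

Lemma herm2 (akk all akl : C) : complex.Im akk = 0 -> complex.Im all = 0 ->
  (forall c : C, 0 <= complex.Re (akk + c * akl + c^* * akl^* + c^* * c * all)) ->
  nn akl <= complex.Re akk + complex.Re all.
Proof.
case: akk => dk ek; case: all => dl el; case: akl => x y /= -> -> h.
have h1 := h (Complex 1 0); have h2 := h (Complex (-1) 0).
have h3 := h (Complex 0 1); have h4 := h (Complex 0 (-1)).
move: h1 h2 h3 h4 => /=.
rewrite /nn /= => h1 h2 h3 h4.
have : `|x| <= (dk + dl) / 2.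
  rewrite ler_norml; apply/andP; split; lra.
have : `|y| <= (dk + dl) / 2.
  rewrite ler_norml; apply/andP; split; lra.
lra.
Qed.


Lemma sum_mxvec m p (F : 'I_(m * p) -> C) :
  \sum_k F k = \sum_i \sum_j F (mxvec_index i j).
Proof.
rewrite pair_big /= (reindex (uncurry (@mxvec_index m p))).
  by apply: eq_bigr => -[i j] _.
case: (curry_mxvec_bij m p) => g h1 h2; exists g => x _; [exact: h1|exact: h2].
Qed.

Lemma conjM (x y : C) : (x * y)^* = x^* * y^*.
Proof. exact: rmorphM. Qed.

Lemma tr_adj_mul m (A B : 'M[C]_m) :
  \tr (adjmx A *m B) = \sum_k (mxvec A 0 k)^* * mxvec B 0 k.
Proof.
rewrite sum_mxvec /mxtrace [RHS]exchange_big; apply: eq_bigr => j _.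
rewrite mxE; apply: eq_bigr => i _; by rewrite !mxE !mxvecE.
Qed.

Lemma Re_sum (I : Type) (r : seq I) (P : pred I) (F : I -> C) :
  complex.Re (\sum_(i <- r | P i) F i) = \sum_(i <- r | P i) complex.Re (F i).
Proof.
apply: (big_rec2 (fun a b => complex.Re a = b)) => // i a b _ <-.
by case: (F i) => x y; case: a => x' y'.
Qed.

Lemma psd_entry_bound m (A : 'M[C]_m) (t : R) :
  psd_herm A -> \tr A = t%:C -> forall k l, nn (A k l) <= 2 * t.
Proof.
move=> [hH hP] htr.
have hP' (v : 'cV[C]_m) : 0 <= qf A v := hP v.
have hd k : complex.Im (A k k) = 0 /\ 0 <= complex.Re (A k k).
  have := hP' (1 *: delta_mx k 0 + 0 *: delta_mx k 0).
  rewrite qf_delta conjC1 conjC0 !mul1r !mul0r !addr0 => /geC0 //.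
have hsum : \sum_k complex.Re (A k k) = t by rewrite -Re_sum -/(mxtrace A) htr.
have hdle k : complex.Re (A k k) <= t.
  rewrite -hsum (bigD1 k) //= lerDl; apply: sumr_ge0 => i _; exact: (hd i).2.
move=> k l.
have hlk : A l k = (A k l)^*.
  by rewrite -[in LHS]hH mxE.
apply: (le_trans (herm2 (hd k).1 (hd l).1 _)).
  move=> c; have := hP' (1 *: delta_mx k 0 + c *: delta_mx l 0).
  rewrite qf_delta conjC1 !mul1r !mulr1 hlk => /geC0 [_].
  by rewrite mulrC.
have := hdle k; have := hdle l; lra.
Qed.


Lemma nn_sandwich m (Z X : 'M[C]_m) (c : R) a b :
  (forall k l, nn (X k l) <= c) ->
  nn ((adjmx Z *m X *m Z) a b) <=
    c * (\sum_x \sum_y nn (Z x y)) * (\sum_x \sum_y nn (Z x y)).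
Proof.
move=> hX; set S := \sum_x \sum_y nn (Z x y).
have c0 : 0 <= c by apply: le_trans (nn_ge0 _) (hX a a).
have col a' : \sum_x nn (Z x a') <= S.
  apply: ler_sum => x _; rewrite (bigD1 a') //= lerDl.
  by apply: sumr_ge0 => y _; exact: nn_ge0.
have S0 : forall a', 0 <= \sum_x nn (Z x a').
  by move=> a'; apply: sumr_ge0 => x _; exact: nn_ge0.
rewrite !mxE.
apply: le_trans (nn_sum _ _ _) _.
apply: (@le_trans _ _ (\sum_l (c * \sum_k nn (Z k a)) * nn (Z l b))).
  apply: ler_sum => l _; apply: le_trans (nnM _ _) _; apply: ler_wpM2r; first exact: nn_ge0.
  rewrite mxE; apply: le_trans (nn_sum _ _ _) _; rewrite mulr_sumr; apply: ler_sum => k _.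
  apply: le_trans (nnM _ _) _; rewrite !mxE nn_conj mulrC.
  by apply: ler_wpM2r; [exact: nn_ge0 | exact: hX].
rewrite -mulr_sumr -!mulrA; apply: ler_wpM2l => //.
apply: ler_pM; [exact: S0|exact: S0|exact: col|exact: col].
Qed.

Section Bound.
Variable n : nat.
Local Notation K := (n * n)%N.
Variables (E : 'I_K -> 'M[C]_n).
Hypothesis basis : is_mx_basis E.
Local Notation G a b := (adjmx (E a) *m E b).

Let T : 'M[C]_K := \matrix_(a < K) mxvec (E a).
Let W : 'M[C]_K := map_mx Num.conj T.
Let Z : 'M[C]_K := invmx W.

Lemma Tunit : T \in unitmx.
Proof. by rewrite -row_free_unit; case: basis. Qed.

Lemma Wunit : W \in unitmx.
Proof. by rewrite /W map_unitmx Tunit. Qed.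

Lemma tr_identity chi : Omega E chi -> \tr (adjmx W *m chi *m W) = n%:R.
Proof.
move=> [_ hc].
have h1 : \tr (\sum_a \sum_b (chi a b)^* *: G a b) = n%:R by rewrite hc mxtrace1.
have L : \tr (adjmx W *m chi *m W) = \sum_k \sum_b \sum_a T a k * chi a b * (T b k)^*.
  rewrite /mxtrace; apply: eq_bigr => k _; rewrite mxE; apply: eq_bigr => b _.
  rewrite mxE mulr_suml; apply: eq_bigr => a _; by rewrite !mxE conjCK.
have Rr : \tr (\sum_a \sum_b (chi a b)^* *: G a b) =
    \sum_a \sum_b (chi a b)^* * \sum_k (T a k)^* * T b k.
  rewrite linear_sum; apply: eq_bigr => a _; rewrite linear_sum; apply: eq_bigr => b _.
  rewrite linearZ /= tr_adj_mul; congr (_ * _); apply: eq_bigr => k _; by rewrite !mxE.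
have h3 : (n%:R : C) = \sum_a \sum_b \sum_k T a k * chi a b * (T b k)^*.
  rewrite -conjC_nat -h1 Rr conj_sumC; apply: eq_bigr => a _.
  rewrite conj_sumC; apply: eq_bigr => b _.
  rewrite conjM conjCK conj_sumC mulr_sumr; apply: eq_bigr => k _.
  by rewrite conjM conjCK; ring.
rewrite L h3 exchange_big; under eq_bigr do rewrite exchange_big.
by rewrite exchange_big.
Qed.


Lemma Omega_bound : exists Bd : R, forall chi, Omega E chi -> forall a b, nn (chi a b) <= Bd.
Proof.
exists (2 * n%:R * (\sum_x \sum_y nn (Z x y)) * (\sum_x \sum_y nn (Z x y))).
move=> chi hO a b.
have psd' : psd_herm (adjmx W *m chi *m W).
  split.
    by rewrite !adjmx_mul adjmxK hO.1.1 mulmxA.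
  move=> v; have := hO.1.2 (W *m v).
  by rewrite adjmx_mul !mulmxA.
have tr' : \tr (adjmx W *m chi *m W) = (n%:R : R)%:C.
  by rewrite tr_identity // rmorph_nat.
have chiE : chi = adjmx Z *m (adjmx W *m chi *m W) *m Z.
  rewrite !mulmxA -adjmx_mul mulmxV ?Wunit // adjmx1 mul1mx -mulmxA.
  by rewrite mulmxV ?Wunit // mulmx1.
rewrite chiE; apply: nn_sandwich => k l.
exact: psd_entry_bound psd' tr' k l.
Qed.

Lemma Omega_ne : exists chi, Omega E chi.
Proof.
pose e : 'rV[C]_K := mxvec (1%:M : 'M[C]_n) *m invmx T.
have eT : e *m T = mxvec 1%:M by rewrite /e mulmxKV // Tunit.
have hE : \sum_a e 0 a *: E a = 1%:M.
  apply: (can_inj mxvecK); rewrite -eT mulmx_sum_row linear_sum.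
  by apply: eq_bigr => a _; rewrite linearZ /= rowK.
pose chi0 : 'M[C]_K := \matrix_(a, b) (e 0 a * (e 0 b)^*).
exists chi0; split; first split.
- by apply/matrixP => i j; rewrite !mxE conjM conjCK mulrC.
- move=> v; set z := \sum_i (v i 0)^* * e 0 i.
  have -> : (adjmx v *m chi0 *m v) 0 0 = z * z^*.
    rewrite conj_sumC mulr_sumr mxE; apply: eq_bigr => j _.
    rewrite mxE mulr_suml mulr_suml; apply: eq_bigr => i _.
    by rewrite !mxE conjM conjCK; ring.
  exact: mul_conjC_ge0.
- transitivity (adjmx (\sum_a e 0 a *: E a) *m (\sum_b e 0 b *: E b));
    last by rewrite hE adjmx1 mulmx1.
  rewrite adjmx_sum mulmx_suml; apply: eq_bigr => a _.
  rewrite mulmx_sumr; apply: eq_bigr => b _.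
  by rewrite !mxE adjmxZ -scalemxAl -scalemxAr scalerA conjM conjCK.
Qed.

Lemma Omega_compact : compact [set r : 'rV[R]_(K * K + K * K) | Omega E (dec r)].
Proof.
have [Bd hB] := Omega_bound.
have hc : compact [set v : 'rV[R]_(K * K + K * K) |
    forall i, `[(- Bd), Bd]%classic (v ord0 i)].
  have := (@rV_compact R _ (fun=> `[(- Bd), Bd]%classic) (fun=> @segment_compact R _ _)).
  exact.
apply: (subclosed_compact _ hc); first exact: Omega_closed.
move=> r hr k /=; rewrite in_itv /= -ler_norml.
rewrite -(@fintype.splitK _ _ k); case: (fintype.split k) => k1 /=.
  case/mxvec_indexP: k1 => i j.
  have -> : r 0 (lshift _ (mxvec_index i j)) = complex.Re (dec r i j) by rewrite !mxE.
  exact: le_trans (nn_Re _) (hB _ hr i j).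
case/mxvec_indexP: k1 => i j.
have -> : r 0 (rshift _ (mxvec_index i j)) = complex.Im (dec r i j) by rewrite !mxE.
exact: le_trans (nn_Im _) (hB _ hr i j).
Qed.

End Bound.


Lemma transfer (T U : Type) (S1 : T -> Prop) (S2 : U -> Prop) (P : T -> U -> R) x0 y0 :
  S1 x0 -> S2 y0 -> (forall x, S1 x -> P x y0 <= P x0 y0) ->
  (forall y, S2 y -> P x0 y0 <= P x0 y) ->
  (forall x, S1 x -> exists2 y, S2 y & forall y', S2 y' -> P x y <= P x y') ->
  (forall y, S2 y -> exists2 x, S1 x & forall x', S1 x' -> P x' y <= P x y) ->
  maxmin_is S1 S2 P (P x0 y0) /\ minmax_is S1 S2 P (P x0 y0).
Proof.
move=> hx0 hy0 hs1 hs2 amin amax; split; split.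
- move=> x hx; have [y hy hmin] := amin x hx; exists (P x y); split => //.
  by exists y.
- split; first by exists x0 => //; split => //; exists y0.
  by move=> x m hx [[y hy <-] hm]; apply: le_trans (hm _ hy0) (hs1 _ hx).
- move=> y hy; have [x hx hmax] := amax y hy; exists (P x y); split => //.
  by exists x.
- split; first by exists y0 => //; split => //; exists x0.
  by move=> y M hy [[x hx <-] hM]; apply: le_trans (hs2 _ hy) (hM _ hx0).
Qed.

Lemma main_general n (E : 'I_(n * n) -> 'M[C]_n) (Ro rho : 'M[C]_(n * n)) :
  is_mx_basis E -> exists v : R,
    maxmin_is (Omega E) (Omega E) (payoff E Ro rho) v /\
    minmax_is (Omega E) (Omega E) (payoff E Ro rho) v.
Proof.
move=> basis.
pose X := [set r : 'rV[R]_(n * n * (n * n) + n * n * (n * n)) | Omega E (dec r)].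
have cX : compact X := Omega_compact basis.
have neX : X !=set0.
  by have [chi hchi] := Omega_ne basis; exists (enc chi); rewrite /X /= dec_enc.
have cvx k (l : 'rV[R]_k) (p : 'I_k -> _) : (0 < k)%N -> simplex l ->
    (forall i, X (p i)) -> X (\sum_i l 0 i *: p i).
  move=> _ hl hp; rewrite /X /= (dec_sum (fun i => l 0 i)).
  exact: Omega_conv.
have [r0 [s0 [Xr0 Xs0 h1 h2]]] := saddle cX cX neX neX cvx cvx
   (@pay_linl n E Ro rho) (@pay_linr n E Ro rho).
exists (payoff E Ro rho (dec r0) (dec s0)).
apply: transfer => //.
- move=> x hx; have := h1 (enc x); rewrite /pay dec_enc; apply; rewrite /X /= dec_enc.
  exact: hx.
- move=> y hy; have := h2 (enc y); rewrite /pay dec_enc; apply; rewrite /X /= dec_enc.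
  exact: hy.
- move=> x hx; have [s hs hmin] := attain_min cX neX (@pay_linr n E Ro rho) (enc x).
  exists (dec s) => // y' hy'; have := hmin (enc y'); rewrite /pay !dec_enc; apply.
  by rewrite /X /= dec_enc.
- move=> y hy; have [r hr hmax] := attain_max cX neX (@pay_linl n E Ro rho) (enc y).
  exists (dec r) => // x' hx'; have := hmax (enc x'); rewrite /pay !dec_enc; apply.
  by rewrite /X /= dec_enc.
Qed.

End Q.

Local Open Scope ring_scope.

Theorem theorem2 (R : realType) (q : nat)
    (E : 'I_(2 ^ q * 2 ^ q) -> 'M[R[i]]_(2 ^ q))
    (rho : 'M[R[i]]_(2 ^ q * 2 ^ q))
    (L : nat) (M : 'I_L -> 'M[R[i]]_(2 ^ q * 2 ^ q)) (aI aII : 'I_L -> R) :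
  is_mx_basis E ->
  density rho ->
  povm M ->
  (forall m, aII m = - aI m) ->
  exists v : R,
    maxmin_is (Omega E) (Omega E) (payoff E (obsR aI M) rho) v /\
    minmax_is (Omega E) (Omega E) (payoff E (obsR aI M) rho) v.
Proof.
move=> hb _ _ _; exact: main_general.
Qed.
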